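(* Let $A \in \mathbb{R}^{m \times n}$ and $b \in \mathbb{R}^m$ be such that $\mathcal{P} = \{x \in \mathbb{R}^n : Ax \geq b\}$ is a polytope. Let $G$ be a finite undirected graph whose vertices are pairs $u = (I, X)$ with $I \subset [m]$ and $X \in \mathbb{R}^{n \times (1+m)}$. Suppose that $G$ is nonempty and that for every vertex $u = (I,X)$ of $G$: (i) $\#I = n$; (ii) $A_I X = \tilde b_I$; (iii) $A X \geq_{\mathrm{lex}} \tilde b$; (iv) $u$ has exactly $n$ neighbors in $G$; (v) for every neighbor $u' = (I', X')$ of $u$ in $G$, $\#(I \cap I') = n-1$. Then the map $(I,X) \mapsto I$ is a graph isomorphism from $G$ onto the lex-graph $G_\mathrm{lex}$ of $(A,b)$.
   Context: Let $\tilde b := [\,b \;\; -\mathrm{Id}_m\,] \in \mathbb{R}^{m \times (1+m)}$. For row vectors $\alpha,\beta \in \mathbb{R}^{1+m}$, $\alpha \leq_{\mathrm{lex}} \beta$ means $\alpha = \beta$ or $\alpha_k < \beta_k$ at the first index $k$ where they differ; for matrices with $1+m$ columns, $X \geq_{\mathrm{lex}} Y$ means $X_i \geq_{\mathrm{lex}} Y_i$ for every row $i$. For $I \subset [m]$, $A_I$, $\tilde b_I$ are the submatrices of rows indexed by $I$. A lex-feasible basis is a set $I \subset [m]$ with $\#I = n$, $A_I$ nonsingular, and $X^I := A_I^{-1}\tilde b_I$ satisfying $A X^I \geq_{\mathrm{lex}} \tilde b$. The lex-graph $G_\mathrm{lex}$ has the lex-feasible bases as vertices, with an edge between $I$ and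 $I'$ iff $\#(I \cap I') = n-1$. *)

(* Defs.v *)
From HB Require Import structures.
From mathcomp Require Import all_boot all_order all_algebra.
From mathcomp Require Import reals.
Set Implicit Arguments. Unset Strict Implicit. Unset Printing Implicit Defensive.
Import Order.TTheory GRing.Theory Num.Theory.
Local Open Scope ring_scope.

Section Defs.
Variable R : realType.

Definition lexle {p : nat} (u v : 'rV[R]_p) : bool :=
  (u == v) ||
  [exists k : 'I_p,
     [forall j : 'I_p, (j < k)%N ==> (u 0 j == v 0 j)] && (u 0 k < v 0 k)].

Definition lexge_mx {q p : nat} (X Y : 'M[R]_(q, p)) : Prop :=
  forall i : 'I_q, lexle (row i Y) (row i X).

Definition btilde {m : nat} (b : 'cV[R]_m) : 'M[R]_(m, 1 + m) :=
  row_mx b (- 1%:M).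

Definition subrows {m p : nat} (I : {set 'I_m}) (M : 'M[R]_(m, p))
  : 'M[R]_(#|I|, p) :=
  \matrix_(i < #|I|) row (enum_val i) M.

Definition in_polyhedron {m n : nat} (A : 'M[R]_(m, n)) (b : 'cV[R]_m)
  (x : 'cV[R]_n) : Prop :=
  forall i : 'I_m, b i 0 <= (A *m x) i 0.

Definition is_polytope {m n : nat} (A : 'M[R]_(m, n)) (b : 'cV[R]_m) : Prop :=
  exists M : R, forall x : 'cV[R]_n, in_polyhedron A b x ->
    forall j : 'I_n, `|x j 0| <= M.

(* lex-feasible basis: #I = n, A_I nonsingular, X^I := A_I^{-1} b~_I
   satisfies A X^I >=_lex b~ *)
Definition lex_feasible {m n : nat} (A : 'M[R]_(m, n)) (b : 'cV[R]_m)
  (I : {set 'I_m}) : Prop :=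
  exists e : #|I| = n,
    let AI : 'M[R]_n := castmx (e, erefl n) (subrows I A) in
    let bI : 'M[R]_(n, 1 + m) := castmx (e, erefl (1 + m)%N) (subrows I (btilde b)) in
    AI \in unitmx /\ lexge_mx (A *m (invmx AI *m bI)) (btilde b).

(* edges of the lex-graph: #(I ∩ I') = n - 1 (as integers) *)
Definition lex_adj {m : nat} (n : nat) (I I' : {set 'I_m}) : Prop :=
  (#|I :&: I'|).+1 = n.

End Defs.

(* Main.v *)
Require Import Defs.
From HB Require Import structures.
From mathcomp Require Import all_boot all_order all_algebra.
From mathcomp Require Import reals boolp.
From mathcomp Require Import lra.
Set Implicit Arguments. Unset Strict Implicit. Unset Printing Implicit Defensive.
Import Order.TTheory GRing.Theory Num.Theory.
Local Open Scope ring_scope.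

Section Lex.
Variable R : realType.
Variable p : nat.
Implicit Types u v w : 'rV[R]_p.

Definition lexpos w := [exists k : 'I_p,
     [forall j : 'I_p, (j < k)%N ==> (w 0 j == 0)] && (0 < w 0 k)].

Lemma lexleE u v : lexle u v = (u == v) || lexpos (v - u).
Proof.
rewrite /lexle /lexpos; congr (_ || _); apply: eq_existsb => k.
rewrite !mxE subr_gt0; congr (_ && _); apply: eq_forallb => j.
by rewrite !mxE subr_eq0 eq_sym.
Qed.

Lemma lexposP w : reflect (exists k : 'I_p, (forall j : 'I_p, (j < k)%N -> w 0 j = 0) /\ 0 < w 0 k) (lexpos w).
Proof.
apply: (iffP existsP) => [[k /andP[/forallP H1 H2]]|[k [H1 H2]]]; exists k.
  by split=> // j jk; apply/eqP; exact: (implyP (H1 j) jk).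
by rewrite H2 andbT; apply/forallP => j; apply/implyP => jk; rewrite H1.
Qed.

Lemma lexposD u v : lexpos u -> lexpos v -> lexpos (u + v).
Proof.
move=> /lexposP[k1 [H1 P1]] /lexposP[k2 [H2 P2]]; apply/lexposP.
case: (ltngtP k1 k2) => [lt12|lt21|/val_inj eq12].
- exists k1; split; first by move=> j jk; rewrite mxE H1 // H2 ?addr0 //; exact: ltn_trans lt12.
  by rewrite mxE (H2 _ lt12) addr0.
- exists k2; split; first by move=> j jk; rewrite mxE H1 ?H2 ?addr0 //; exact: ltn_trans lt21.
  by rewrite mxE (H1 _ lt21) add0r.
- subst k2; exists k1; split; first by move=> j jk; rewrite mxE H1 ?H2 ?addr0.
  by rewrite mxE addr_gt0.
Qed.

Lemma lexposZ (a : R) u : 0 < a -> lexpos u -> lexpos (a *: u).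
Proof.
move=> a0 /lexposP[k [H1 P1]]; apply/lexposP; exists k; split.
  by move=> j jk; rewrite mxE H1 ?mulr0.
by rewrite mxE mulr_gt0.
Qed.

Lemma lexpos0 : ~~ lexpos 0.
Proof. by apply/lexposP => -[k [_]]; rewrite mxE ltxx. Qed.

Lemma lexpos_asym u : lexpos u -> ~~ lexpos (- u).
Proof. by move=> pu; apply/negP => nu; have := lexposD pu nu; rewrite subrr (negbTE lexpos0). Qed.

Lemma lexpos_tri u : u != 0 -> lexpos u || lexpos (- u).
Proof.
move=> nz.
have ex : exists k : nat, [exists j : 'I_p, (val j == k) && (u 0 j != 0)].
  have [j Hj] : exists j : 'I_p, u 0 j != 0.
    apply/existsP; rewrite -negb_forall; apply: contra nz => /forallP H.
    by apply/eqP/rowP => j; rewrite mxE; apply/eqP/H.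
  by exists j; apply/existsP; exists j; rewrite eqxx.
case: (ex_minnP ex) => k /existsP[j /andP[/eqP jk ujnz]] kmin.
have lower : forall i : 'I_p, (i < j)%N -> u 0 i = 0.
  move=> i ij; apply/eqP; apply/negPn/negP => ui.
  have : [exists j0 : 'I_p, (val j0 == i) && (u 0 j0 != 0)] by apply/existsP; exists i; rewrite eqxx.
  by move/kmin; rewrite -jk leqNgt ij.
case: (ltrgtP (u 0 j) 0) ujnz => // [uneg|upos] _.
  apply/orP; right; apply/lexposP; exists j; split.
    by move=> i ij; rewrite mxE lower ?oppr0.
  by rewrite mxE oppr_gt0.
by apply/orP; left; apply/lexposP; exists j.
Qed.


Definition nn u := (u == 0) || lexpos u.

Lemma lexleE' u v : lexle u v = nn (v - u).
Proof. by rewrite lexleE /nn subr_eq0 eq_sym. Qed.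

Lemma pos_nn u : lexpos u -> nn u.
Proof. by move=> pu; rewrite /nn pu orbT. Qed.

Lemma nn0 : nn 0.
Proof. by rewrite /nn eqxx. Qed.

Lemma nnD u v : nn u -> nn v -> nn (u + v).
Proof.
case/orP=> [/eqP->|pu]; first by rewrite add0r.
case/orP=> [/eqP->|pv]; first by rewrite addr0 pos_nn.
by rewrite pos_nn // lexposD.
Qed.

Lemma posnnD u v : lexpos u -> nn v -> lexpos (u + v).
Proof. by move=> pu /orP[/eqP->|pv]; rewrite ?addr0 // lexposD. Qed.

Lemma nnZ (a : R) u : 0 <= a -> nn u -> nn (a *: u).
Proof.
rewrite le0r => /orP[/eqP->|a0]; first by rewrite scale0r nn0.
by case/orP=> [/eqP->|pu]; rewrite ?scaler0 ?nn0 // pos_nn // lexposZ.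
Qed.

Lemma nn_pos u : nn u -> u != 0 -> lexpos u.
Proof. by case/orP=> [/eqP->|//]; rewrite eqxx. Qed.

Lemma pos_neq0 u : lexpos u -> u != 0.
Proof. by apply: contraTneq => ->; exact: lexpos0. Qed.

Lemma pos_not_nnN u : lexpos u -> ~~ nn (- u).
Proof.
move=> pu; rewrite /nn negb_or oppr_eq0 pos_neq0 //=.
exact: lexpos_asym.
Qed.

Lemma nn_or u : nn u || lexpos (- u).
Proof.
case: (altP (u =P 0)) => [->|nz]; first by rewrite nn0.
by case/orP: (lexpos_tri nz) => [pu|->]; rewrite ?orbT ?pos_nn.
Qed.

Lemma lexposZ_inv (c : R) u : 0 < c -> lexpos (c *: u) -> lexpos u.
Proof.
move=> c0 pu; have ci : 0 < c^-1 by rewrite invr_gt0.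
have := lexposZ ci pu.
by rewrite scalerA mulVf ?scale1r // gt_eqF.
Qed.

Lemma lexposZN (a : R) u : a < 0 -> lexpos u -> lexpos (- (a *: u)).
Proof. by move=> a0 pu; rewrite -scaleNr lexposZ // oppr_gt0. Qed.

Lemma nn_sum (I : finType) (P : pred I) (F : I -> 'rV[R]_p) :
  (forall i, P i -> nn (F i)) -> nn (\sum_(i | P i) F i).
Proof. by move=> H; apply: (big_ind (@nn)); [exact: nn0 | exact: nnD | exact: H]. Qed.

Lemma lexle_trans u v w : lexle u v -> lexle v w -> lexle u w.
Proof.
rewrite !lexleE' => h1 h2; have := nnD h2 h1.
by rewrite addrA subrK.
Qed.

Lemma lexle_total u v : lexle u v || lexle v u.
Proof.
rewrite !lexleE'; case/orP: (nn_or (v - u)) => [->//|].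
by rewrite opprB => /pos_nn ->; rewrite orbT.
Qed.

Lemma lexpos_first w (k0 : 'I_p) : val k0 = 0%N -> nn w -> 0 <= w 0 k0.
Proof.
move=> k00 /orP[/eqP->|/lexposP[k [H1 H2]]]; first by rewrite mxE.
case: (posnP k) => [kz|kp].
  have -> : k0 = k by apply: val_inj; rewrite /= k00 kz.
  exact: ltW.
by rewrite H1 // k00.
Qed.

End Lex.


Section Main.
Variable R : realType.
Variables m n : nat.
Variable A : 'M[R]_(m, n).
Variable b : 'cV[R]_m.
Local Notation Bt := (btilde b).
Local Notation Mx := ('M[R]_(n, 1 + m)).
Implicit Types (I J : {set 'I_m}) (X Y : Mx).

Definition tight (I : {set 'I_m}) (X : Mx) :=
  forall i, i \in I -> row i (A *m X) = row i Bt.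

Definition dvec (X : Mx) (i : 'I_m) : 'cV[R]_n := - col (rshift 1 i) X.

Lemma Bt_r i j : Bt i (rshift 1 j) = - (i == j)%:R.
Proof. by rewrite /btilde row_mxEr !mxE. Qed.

Lemma Bt_l i : Bt i (lshift m 0) = b i 0.
Proof. by rewrite /btilde row_mxEl. Qed.

Lemma row_entry p q (M : 'M[R]_(p, q)) i j : row i M 0 j = M i j.
Proof. by rewrite mxE. Qed.

Lemma Ad_tight I X i' i : tight I X -> i' \in I -> (A *m dvec X i) i' 0 = (i' == i)%:R.
Proof.
move=> tX iI; rewrite /dvec mulmxN mxE.
have -> : (A *m col (rshift 1 i) X) i' 0 = (A *m X) i' (rshift 1 i).
  by rewrite !mxE; apply: eq_bigr => j _; rewrite !mxE.
have := f_equal (fun M : 'rV[R]_(1 + m) => M 0 (rshift 1 i)) (tX i' iI).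
rewrite /= !row_entry Bt_r => ->.
by rewrite opprK.
Qed.

Lemma expand I X p (Z : 'M[R]_(n, p)) : #|I| = n -> tight I X ->
  Z = \sum_(i in I) dvec X i *m row i (A *m Z).
Proof.
move=> cI tX.
pose s k := enum_val (cast_ord (esym cI) k) : 'I_m.
have sinj : injective s by move=> k l /enum_val_inj /cast_ord_inj.
have sI : s @: setT = I.
  apply/eqP; rewrite eqEcard card_imset // cardsT card_ord cI leqnn andbT.
  by apply/subsetP => x /imsetP[k _ ->]; exact: enum_valP.
pose AI := \matrix_(k, j) A (s k) j : 'M[R]_n.
pose D := \matrix_(r, k) dvec X (s k) r 0 : 'M[R]_n.
have AD : AI *m D = 1%:M.
  apply/matrixP => k l.
  transitivity ((A *m dvec X (s l)) (s k) 0).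
    by rewrite !mxE; apply: eq_bigr => j _; rewrite !mxE.
  rewrite (Ad_tight _ tX); last by rewrite -sI imset_f // inE.
  by rewrite (inj_eq sinj) !mxE.
have DA := mulmx1C AD.
apply/matrixP => r c.
transitivity ((D *m (AI *m Z)) r c); first by rewrite mulmxA DA mul1mx.
rewrite summxE -sI big_imset /=; last first.
  by move=> ? ? _ _; apply: sinj.
rewrite mxE; rewrite [RHS](eq_bigl predT); last by move=> k; rewrite inE.
apply: eq_bigr => k _.
rewrite !mxE big_ord1 !mxE; congr (_ * _).
by apply: eq_bigr => j _; rewrite !mxE.
Qed.


Definition feas X := lexge_mx (A *m X) Bt.
Definition basic I X := [/\ #|I| = n, tight I X & feas X].
Definition rr X j : 'rV[R]_(1 + m) := row j (A *m X) - row j Bt.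

Lemma feas_nn X j : feas X -> nn (rr X j).
Proof. by move=> F; have := F j; rewrite lexleE'. Qed.

Lemma rr_tight I X j : tight I X -> j \in I -> rr X j = 0.
Proof. by move=> t jI; rewrite /rr t // subrr. Qed.

Lemma uniq0 I X p (Z : 'M[R]_(n, p)) : #|I| = n -> tight I X ->
  (forall i, i \in I -> row i (A *m Z) = 0) -> Z = 0.
Proof.
move=> c t H; rewrite (expand Z c t); apply: big1 => i iI.
by rewrite H // mulmx0.
Qed.

Lemma A_col X j' i : (A *m col j' X) i 0 = (A *m X) i j'.
Proof. by rewrite !mxE; apply: eq_bigr => l _; rewrite !mxE. Qed.

Lemma tight_entry I X i c : tight I X -> i \in I -> (A *m X) i c = Bt i c.
Proof.
move=> t iI; have := f_equal (fun M : 'rV[R]_(1 + m) => M 0 c) (t i iI).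
by rewrite /= !row_entry.
Qed.

Lemma rr_entry X j c : rr X j 0 c = (A *m X) j c - Bt j c.
Proof. by rewrite /rr !mxE. Qed.

Lemma nondeg I X j : #|I| = n -> tight I X -> j \notin I -> rr X j != 0.
Proof.
move=> c t jn.
have Z0 : col (rshift 1 j) X = 0.
  apply: (uniq0 c t) => i iI; apply/rowP => k.
  rewrite (ord1 k) row_entry A_col (tight_entry _ t iI) Bt_r mxE.
  have -> : (i == j) = false by apply/negbTE; apply: contraNneq jn => <-.
  by rewrite oppr0.
apply/eqP => /(f_equal (fun M : 'rV[R]_(1 + m) => M 0 (rshift 1 j))).
rewrite rr_entry -A_col Z0 mulmx0 Bt_r eqxx !mxE opprK add0r.
by move/eqP; rewrite oner_eq0.
Qed.

Lemma row_upd X (d : 'cV[R]_n) (l : 'rV[R]_(1 + m)) j :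
  row j (A *m (X + d *m l)) = row j (A *m X) + (A *m d) j 0 *: l.
Proof.
apply/rowP => c; rewrite mulmxDr mulmxA !mxE big_ord1.
by congr (_ + _); rewrite !mxE.
Qed.

Lemma rr_upd X (d : 'cV[R]_n) (l : 'rV[R]_(1 + m)) j :
  rr (X + d *m l) j = rr X j + (A *m d) j 0 *: l.
Proof. by rewrite /rr row_upd addrAC. Qed.

Lemma basic_nd I X j : basic I X -> j \notin I -> lexpos (rr X j).
Proof. by case=> c t F jn; apply: nn_pos; [exact: feas_nn | exact: nondeg jn]. Qed.

Lemma in_poly X : feas X -> in_polyhedron A b (col (lshift m 0) X).
Proof.
move=> F i; rewrite A_col -Bt_l -subr_ge0 -rr_entry.
by apply: lexpos_first; last exact: feas_nn.
Qed.

Lemma no_ray x (d : 'cV[R]_n) : is_polytope A b -> in_polyhedron A b x ->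
  (forall j, 0 <= (A *m d) j 0) -> d = 0.
Proof.
move=> [M HM] Px Hd; apply/matrixP => r c; rewrite (ord1 c) [RHS]mxE.
apply/eqP/negPn/negP => dnz.
have xM := HM x Px r.
have dpos : 0 < `|d r 0| by rewrite normr_gt0.
pose t := (M + `|x r 0| + 1) / `|d r 0|.
have t0 : 0 <= t.
  have M0 : 0 <= M by apply: le_trans xM.
  by rewrite /t divr_ge0 // addr_ge0 // addr_ge0.
have Pxt : in_polyhedron A b (x + t *: d).
  move=> j; rewrite mulmxDr -scalemxAr mxE [X in _ <= _ + X]mxE.
  apply: le_trans (Px j) _; rewrite lerDl.
  by apply: mulr_ge0.
have := HM _ Pxt r; rewrite mxE [X in `|_ + X|]mxE => H.
have td : `|t * d r 0| = M + `|x r 0| + 1.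
  by rewrite normrM (ger0_norm t0) /t divfK // gt_eqF.
have : `|t * d r 0| <= `|x r 0 + t * d r 0| + `|x r 0|.
  have E : t * d r 0 = (x r 0 + t * d r 0) - x r 0 by rewrite addrC addKr.
  by rewrite {1}E; exact: ler_normB.
rewrite td => H2.
have := le_trans H2 (lerD H (lexx `|x r 0|)).
move: (M + _) => z; lra.
Qed.

Lemma row_dl j (d : 'cV[R]_n) (l : 'rV[R]_(1 + m)) :
  row j (A *m (d *m l)) = (A *m d) j 0 *: l.
Proof. by apply/rowP => c; rewrite mulmxA !mxE big_ord1 !mxE. Qed.

Lemma rr_diff X Y j : row j (A *m (X - Y)) = rr X j - rr Y j.
Proof. by rewrite /rr mulmxBr raddfB /= opprB addrA subrK. Qed.

Lemma rr0_tight X j : rr X j = 0 -> row j (A *m X) = row j Bt.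
Proof. by move/eqP; rewrite subr_eq0 => /eqP. Qed.

Definition fval J X := \sum_(j in J) rr X j.
Definition yv J X i := \sum_(j in J) (A *m dvec X i) j 0.

Lemma fval_tight J X : tight J X -> fval J X = 0.
Proof. by move=> t; apply: big1 => j jJ; rewrite (rr_tight t). Qed.

Lemma diff_elem (I1 I2 : {set 'I_m}) : #|I1| = #|I2| -> I1 != I2 ->
  exists2 j, j \in I2 & j \notin I1.
Proof.
move=> c ne; apply/subsetPn; apply: contra ne => sub.
by rewrite eq_sym eqEcard sub c leqnn.
Qed.

Lemma fval_pos I X J : basic I X -> #|J| = n -> I != J -> lexpos (fval J X).
Proof.
move=> bX cJ ne; case: (bX) => cI _ fX.
have [j jJ jI] := diff_elem (etrans cI (esym cJ)) ne.
rewrite /fval (bigD1 j) //=; apply: posnnD; first exact: basic_nd bX jI.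
by apply: nn_sum => k _; apply: feas_nn.
Qed.

Lemma improve I X J XJ : basic I X -> basic J XJ -> I != J ->
  exists2 i, i \in I & yv J X i < 0.
Proof.
move=> bX bXJ ne.
have [/existsP[i /andP[iI yi]]|H] := boolP [exists i, (i \in I) && (yv J X i < 0)].
  by exists i.
exfalso.
have Hy : forall i, i \in I -> 0 <= yv J X i.
  move=> i iI; rewrite leNgt; apply: contra H => yi.
  by apply/existsP; exists i; rewrite iI.
case: (bX) => cI tI fX; case: (bXJ) => cJ tJ fXJ.
have hexp := expand (X - XJ) cI tI.
have key : fval J X = \sum_(i in I) yv J X i *: (- rr XJ i).
  have E : fval J X = fval J X - fval J XJ by rewrite (fval_tight tJ) subr0.
  rewrite E /fval -sumrB.
  under eq_bigr => j _ do rewrite -rr_diff hexp mulmx_sumr raddf_sum /=.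
  rewrite exchange_big /=; apply: eq_bigr => i iI.
  rewrite /yv scaler_suml; apply: eq_bigr => j _.
  by rewrite row_dl rr_diff (rr_tight tI iI) sub0r.
have : nn (- fval J X).
  rewrite key -sumrN; apply: nn_sum => i iI.
  by rewrite scalerN opprK; apply: nnZ; [exact: Hy | exact: feas_nn].
by apply/negP; apply: pos_not_nnN; apply: fval_pos bX cJ ne.
Qed.

Lemma lexle_refl p (u : 'rV[R]_p) : lexle u u.
Proof. by rewrite /lexle eqxx. Qed.

Lemma exists_min_seq (T : eqType) p (f : T -> 'rV[R]_p) (s : seq T) : s != [::] ->
  exists2 x, x \in s & forall y, y \in s -> lexle (f x) (f y).
Proof.
elim: s => [//|x s IH] _.
case: (altP (s =P [::])) => [->|sne].
  by exists x; rewrite ?mem_head // => y; rewrite inE => /eqP->; exact: lexle_refl.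
have [z zs zmin] := IH sne.
case/orP: (lexle_total (f x) (f z)) => H.
  exists x; first exact: mem_head.
  move=> y; rewrite inE => /orP[/eqP->|ys]; first exact: lexle_refl.
  exact: lexle_trans H (zmin _ ys).
exists z; first by rewrite inE zs orbT.
by move=> y; rewrite inE => /orP[/eqP->//|ys]; exact: zmin.
Qed.

Lemma exists_min (T : finType) p (f : T -> 'rV[R]_p) (S : {set T}) : S != set0 ->
  exists2 x, x \in S & forall y, y \in S -> lexle (f x) (f y).
Proof.
move=> Sne.
have : enum S != [::].
  apply: contra Sne => /eqP E; apply/eqP/setP => x; rewrite inE -mem_enum E.
  by [].
move/(exists_min_seq f) => [x xS H]; exists x; first by rewrite -mem_enum.
by move=> y yS; apply: H; rewrite mem_enum.
Qed.

Lemma pivot I X J i : is_polytope A b -> basic I X -> i \in I -> yv J X i < 0 ->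
  exists I', exists X', [/\ basic I' X', lex_adj n I I' & lexpos (fval J X - fval J X')].
Proof.
move=> Pb bX iI yneg; case: (bX) => cI tI fX.
set d := dvec X i.
pose a j := (A *m d) j 0.
have aI : forall k, k \in I -> a k = (k == i)%:R by move=> k kI; exact: Ad_tight tI kI.
have [jn ajn] : exists j, a j < 0.
  have [/existsP//|H] := boolP [exists j, a j < 0].
  exfalso; move: H; rewrite negb_exists => /forallP H.
  have d0 : d = 0.
    apply: (no_ray Pb (in_poly fX)) => j; rewrite -/(a j) leNgt; exact: H.
  by have := aI i iI; rewrite /a d0 mulmx0 mxE eqxx => /esym/eqP; rewrite oner_eq0.
pose Jn := [set j | a j < 0].
pose rho j := (- a j)^-1 *: rr X j.
have Jne : Jn != set0 by apply/set0Pn; exists jn; rewrite inE.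
have [js jsJ jsmin] := exists_min rho Jne.
move: jsJ; rewrite inE => ajs.
have jsI : js \notin I.
  by apply/negP => /aI ajs1; move: ajs; rewrite ajs1 ltNge ler0n.
have rpos : lexpos (rr X js) by apply: basic_nd bX jsI.
pose lam := rho js.
have lpos : lexpos lam by apply: lexposZ => //; rewrite invr_gt0 oppr_gt0.
pose X' := X + d *m lam.
have rrX' : forall j, rr X' j = rr X j + a j *: lam by move=> j; rewrite rr_upd.
pose I' := js |: (I :\ i).
have jsnI : js \notin I :\ i by rewrite in_setD1 (negbTE jsI) andbF.
have cID : #|I| = (#|I :\ i|).+1 by rewrite (cardsD1 i I) iI.
exists I', X'; split.
- split.
  + by rewrite cardsU1 jsnI -cI cID.
  + move=> k; rewrite in_setU1 => /orP[/eqP->|].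
      apply: rr0_tight; rewrite rrX'.
      by rewrite /lam /rho scalerA invrN mulrN mulfV ?lt_eqF // scaleN1r subrr.
    rewrite in_setD1 => /andP[ki kI]; apply: rr0_tight; rewrite rrX'.
    rewrite aI // (negbTE ki) scale0r addr0.
    exact: rr_tight tI kI.
  + move=> j; rewrite lexleE' -/(rr X' j) rrX'.
    have [aj|aj] := leP 0 (a j).
      by apply: nnD; [exact: feas_nn | apply: nnZ => //; exact: pos_nn].
    have jJ : j \in Jn by rewrite inE.
    have := jsmin j jJ; rewrite lexleE' => H.
    have -> : rr X j + a j *: lam = (- a j) *: (rho j - lam).
      have rj : (- a j) *: rho j = rr X j.
        by rewrite /rho scalerA mulfV ?oppr_eq0 ?lt_eqF // scale1r.
      by rewrite scalerBr rj scaleNr opprK.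
    by apply: nnZ => //; rewrite oppr_ge0 ltW.
- rewrite /lex_adj.
  have -> : I :&: I' = I :\ i.
    apply/setP => k; rewrite !inE.
    case: (altP (k =P js)) => [->|_]; first by rewrite (negbTE jsI) andbF.
    by rewrite /=; case: (k \in I); rewrite ?andbT ?andbF.
  by rewrite -cID.
- have -> : fval J X' = fval J X + yv J X i *: lam.
    rewrite /fval /yv scaler_suml -big_split /=.
    by apply: eq_bigr => j _; rewrite rrX'.
  by rewrite opprD addrA subrr add0r; apply: lexposZN.
Qed.

Lemma line I X I1 X1 i : basic I X -> basic I1 X1 -> i \in I -> I :\ i \subset I1 ->
  X1 = X + dvec X i *m rr X1 i.
Proof.
move=> [cI tI fX] [cI1 tI1 fX1] iI sub.
have hexp := expand (X1 - X) cI tI.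
rewrite (bigD1 i) //= big1 ?addr0 in hexp; last first.
  move=> k /andP[kI ki].
  have kI1 : k \in I1 by apply: (subsetP sub); rewrite in_setD1 ki.
  by rewrite rr_diff (rr_tight tI1 kI1) (rr_tight tI kI) subrr mulmx0.
by rewrite rr_diff (rr_tight tI iI) subr0 in hexp; rewrite -hexp addrC subrK.
Qed.

Lemma cross I X I1 X1 I2 X2 i j : basic I X -> basic I1 X1 -> basic I2 X2 ->
  i \in I -> i \notin I1 -> i \notin I2 -> I :\ i \subset I1 -> I :\ i \subset I2 ->
  j \notin I -> j \in I2 -> j \notin I1 ->
  lexpos (rr X2 i - rr X1 i).
Proof.
move=> bX bX1 bX2 iI iI1 iI2 s1 s2 jI jI2 jI1.
have E1 := line bX bX1 iI s1; have E2 := line bX bX2 iI s2.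
set l1 := rr X1 i in E1 *; set l2 := rr X2 i in E2 *.
set d := dvec X i in E1 E2.
have rj := basic_nd bX jI.
have h2 : rr X j + (A *m d) j 0 *: l2 = 0.
  by rewrite -rr_upd -E2; case: bX2 => _ t _; apply: rr_tight t jI2.
have h1 : lexpos (rr X j + (A *m d) j 0 *: l1).
  by rewrite -rr_upd -E1; apply: basic_nd bX1 jI1.
have l2p : lexpos l2 by apply: basic_nd bX2 iI2.
have aneg : (A *m d) j 0 < 0.
  rewrite ltNge; apply/negP => a0.
  have := posnnD rj (nnZ a0 (pos_nn l2p)); rewrite h2.
  by rewrite (negbTE (lexpos0 _ _)).
have : lexpos ((- (A *m d) j 0) *: (l2 - l1)).
  have -> : (- (A *m d) j 0) *: (l2 - l1) =
     (rr X j + (A *m d) j 0 *: l1) - (rr X j + (A *m d) j 0 *: l2).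
    by rewrite scaleNr scalerBr opprB opprD addrACA subrr add0r.
  by rewrite h2 subr0.
by apply: lexposZ_inv; rewrite oppr_gt0.
Qed.

Lemma nbr_unique I X I1 X1 I2 X2 i : basic I X -> basic I1 X1 -> basic I2 X2 ->
  i \in I -> i \notin I1 -> i \notin I2 -> I :\ i \subset I1 -> I :\ i \subset I2 ->
  I1 = I2.
Proof.
move=> bX bX1 bX2 iI iI1 iI2 s1 s2.
apply/eqP/negPn/negP => ne.
have c12 : #|I1| = #|I2| by case: bX1 => -> _ _; case: bX2 => -> _ _.
have [j jI2 jI1] := diff_elem c12 ne.
have ne' : I2 != I1 by rewrite eq_sym.
have [j' jI1' jI2'] := diff_elem (esym c12) ne'.
have notI : forall k (K1 K2 : {set 'I_m}), I :\ i \subset K1 -> i \notin K2 ->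
    k \in K2 -> k \notin K1 -> k \notin I.
  move=> k K1 K2 sK iK kK2 kK1; apply/negP => kI.
  have ki : k != i by apply: contraNneq iK => <-.
  by move: kK1; rewrite (subsetP sK) // in_setD1 ki kI.
have h := cross bX bX1 bX2 iI iI1 iI2 s1 s2 (notI _ _ _ s1 iI2 jI2 jI1) jI2 jI1.
have h' := cross bX bX2 bX1 iI iI2 iI1 s2 s1 (notI _ _ _ s2 iI1 jI1' jI2') jI1' jI2'.
by move: (lexpos_asym h); rewrite opprB h'.
Qed.

Lemma basic_uniq I X Y : basic I X -> basic I Y -> X = Y.
Proof.
move=> [cI tI fX] [_ tY _]; apply/eqP; rewrite -subr_eq0; apply/eqP.
apply: (uniq0 cI tI) => i iI.
by rewrite rr_diff (rr_tight tI iI) (rr_tight tY iI) subrr.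
Qed.

Definition sig I (e : #|I| = n) (k : 'I_n) : 'I_m := enum_val (cast_ord (esym e) k).

Lemma row_sub p (M : 'M[R]_(m, p)) I (e : #|I| = n) k :
  row k (castmx (e, erefl p) (subrows I M)) = row (sig e k) M.
Proof.
apply/rowP => j; rewrite !mxE castmxE /= !mxE.
by rewrite cast_ord_id.
Qed.

Lemma sig_surj I (e : #|I| = n) i : i \in I -> exists k, sig e k = i.
Proof.
move=> iI; exists (cast_ord e (enum_rank_in iI i)).
by rewrite /sig cast_ordK enum_rankK_in.
Qed.

Lemma sig_inj I (e : #|I| = n) : injective (sig e).
Proof. by move=> k l /enum_val_inj /cast_ord_inj. Qed.

Lemma feasible_basic I : lex_feasible A b I <-> exists X, basic I X.
Proof.
split.
  move=> [e]; move=> /= [U H].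
  set AI := castmx _ _ in U H; set bI := castmx _ _ in H.
  exists (invmx AI *m bI); split => //.
  move=> i iI; have [k <-] := sig_surj e iI.
  rewrite row_mul -(row_sub A e) -row_mul mulKVmx //.
  by rewrite /bI row_sub.
move=> [X [cI tI fX]]; exists cI => AI bI.
have AX : AI *m X = bI.
  apply/row_matrixP => k.
  by rewrite row_mul /AI row_sub -row_mul tI ?enum_valP // /bI row_sub.
pose D := \matrix_(r, k) dvec X (sig cI k) r 0 : 'M[R]_n.
have AD : AI *m D = 1%:M.
  apply/matrixP => k l.
  transitivity ((A *m dvec X (sig cI l)) (sig cI k) 0).
    rewrite !mxE; apply: eq_bigr => j _.
    by rewrite -[AI k j]row_entry /AI row_sub row_entry !mxE.
  rewrite (Ad_tight _ tI) ?enum_valP //.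
  by rewrite (inj_eq (@sig_inj I cI)) !mxE.
have [U _] := mulmx1_unit AD.
split => //.
by rewrite -AX mulKmx.
Qed.

Definition Nb I := [set I' : {set 'I_m} |
  `[< exists X', basic I' X' >] && ((#|I :&: I'|).+1 == n)].

Lemma NbP I I' : reflect ((exists X', basic I' X') /\ lex_adj n I I') (I' \in Nb I).
Proof.
rewrite inE; apply: (iffP andP) => [[/asboolP h /eqP h2]|[h h2]]; first by split.
by split; [apply/asboolP | apply/eqP].
Qed.

Lemma nbr_card I X : basic I X -> (#|Nb I| <= n)%N.
Proof.
move=> bX; case: (bX) => cI _ _.
pose f (I' : {set 'I_m}) := [pick k in I :\: I'].
have single : forall I', I' \in Nb I -> exists2 i, I :\: I' = [set i] & f I' = Some i.
  move=> I' /NbP[_ h].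
  have : #|I :\: I'| == 1%N.
    by have := cardsID I' I; rewrite cI -h -addn1 => /eqP; rewrite eqn_add2l.
  case/cards1P => i Ei; exists i => //; rewrite /f Ei.
  case: pickP => [x|H]; first by rewrite inE => /eqP ->.
  by have := H i; rewrite inE eqxx.
have finj : {in Nb I &, injective f}.
  move=> I1 I2 h1 h2 E.
  have [i1 E1 f1] := single _ h1; have [i2 E2 f2] := single _ h2.
  move: E; rewrite f1 f2 => -[ei]; subst i2.
  have [[X1 bX1] _] := NbP _ _ h1; have [[X2 bX2] _] := NbP _ _ h2.
  have hi : forall K, I :\: K = [set i1] -> (i1 \in I) && (i1 \notin K).
    by move=> K EK; have := set11 i1; rewrite -EK in_setD andbC.
  have hs : forall K, I :\: K = [set i1] -> I :\ i1 \subset K.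
    move=> K EK; apply/subsetP => k; rewrite in_setD1 => /andP[ki kI].
    apply/negPn/negP => kn; have : k \in I :\: K by rewrite in_setD kn kI.
    by rewrite EK in_set1 (negbTE ki).
  case/andP: (hi _ E1) => iI iI1; case/andP: (hi _ E2) => _ iI2.
  exact: nbr_unique bX bX1 bX2 iI iI1 iI2 (hs _ E1) (hs _ E2).
rewrite -(card_in_imset finj).
apply: (@leq_trans #|[set Some k | k in I]|).
  apply: subset_leq_card; apply/subsetP => o /imsetP[I' h' ->].
  have [i Ei ->] := single _ h'; apply: imset_f.
  by have := set11 i; rewrite -Ei in_setD => /andP[].
by rewrite card_imset ?cI // => ? ? [].
Qed.

Lemma main_sec (V : finType) (lab : V -> {set 'I_m} * 'M[R]_(n, 1 + m)) (e : rel V) :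
  is_polytope A b ->
  injective lab ->
  symmetric e ->
  (exists v : V, True) ->
  (forall v : V, #|(lab v).1| = n) ->
  (forall v : V, forall i : 'I_m, i \in (lab v).1 ->
     row i (A *m (lab v).2) = row i (btilde b)) ->
  (forall v : V, lexge_mx (A *m (lab v).2) (btilde b)) ->
  (forall v : V, #|[set w | e v w]| = n) ->
  (forall v w : V, e v w -> lex_adj n (lab v).1 (lab w).1) ->
  (forall v : V, lex_feasible A b (lab v).1) /\
  injective (fun v : V => (lab v).1) /\
  (forall I : {set 'I_m}, lex_feasible A b I -> exists v : V, (lab v).1 = I) /\
  (forall v w : V, e v w <-> lex_adj n (lab v).1 (lab w).1).
Proof.
move=> Pb ilab _ [v0 _] hc ht hf hd ha.
have bv : forall v, basic (lab v).1 (lab v).2.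
  by move=> v; split; [exact: hc | exact: ht | exact: hf].
have injI : injective (fun v => (lab v).1).
  move=> v w /= E; apply: ilab; have := bv w; rewrite -E => bw.
  have E2 := basic_uniq (bv v) bw.
  by rewrite [lab v]surjective_pairing [lab w]surjective_pairing E E2.
have nbr : forall v I', I' \in Nb (lab v).1 -> exists2 w, e v w & (lab w).1 = I'.
  move=> v I' h.
  pose W := [set w | e v w].
  have sub : [set (lab w).1 | w in W] \subset Nb (lab v).1.
    apply/subsetP => K /imsetP[w]; rewrite inE => vw ->.
    by apply/NbP; split; [exists (lab w).2; exact: bv | exact: ha].
  have eqS : [set (lab w).1 | w in W] = Nb (lab v).1.
    apply/eqP; rewrite eqEcard sub /= (card_imset _ injI) hd.
    exact: nbr_card (bv v).
  by move: h; rewrite -eqS => /imsetP[w]; rewrite inE => vw ->; exists w.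
split; first by move=> v; apply/feasible_basic; exists (lab v).2; exact: bv.
split; first exact: injI.
split.
  move=> I /feasible_basic [XI bXI].
  pose mu X0 := #|[set K : {set 'I_m} |
     `[< exists XK, basic K XK /\ lexpos (fval I X0 - fval I XK) >]]|.
  suff: forall N I0 X0, basic I0 X0 -> (mu X0 < N)%N ->
      (exists v, (lab v).1 = I0) -> exists v, (lab v).1 = I.
    by move/(_ (mu (lab v0).2).+1 _ _ (bv v0) (ltnSn _)); apply; exists v0.
  elim=> [//|N IH] I0 X0 b0 muN [v Ev].
  case: (altP (I0 =P I)) => [<-|ne]; first by exists v.
  have [i iI yi] := improve b0 bXI ne.
  have [I' [X' [b' adj lt']]] := pivot Pb b0 iI yi.
  have : I' \in Nb I0 by apply/NbP; split; [exists X' | ].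
  rewrite -Ev => /nbr [w _ Ew].
  apply: (IH I' X' b'); last by exists w.
  rewrite ltnS in muN; apply: leq_trans muN; apply: proper_card; apply/properP; split.
    apply/subsetP => K; rewrite !inE => /asboolP [XK [bK pK]]; apply/asboolP.
    exists XK; split => //.
    by have := lexposD lt' pK; rewrite addrA subrK.
  exists I'; rewrite inE; first by apply/asboolP; exists X'; split.
  apply/negP => /asboolP [XK [bK pK]].
  by rewrite (basic_uniq bK b') subrr in pK; rewrite (negbTE (lexpos0 _ _)) in pK.
move=> v w; split; first exact: ha.
move=> h; have : (lab w).1 \in Nb (lab v).1.
  by apply/NbP; split; [exists (lab w).2; exact: bv |].
by move/nbr => [w' vw' E]; rewrite -(injI _ _ E).
Qed.

End Main.

Theorem mainTheorem6 (R : realType) (m n : nat)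
  (A : 'M[R]_(m, n)) (b : 'cV[R]_m)
  (V : finType) (lab : V -> {set 'I_m} * 'M[R]_(n, 1 + m)) (e : rel V) :
  is_polytope A b ->
  injective lab ->
  symmetric e ->
  (exists v : V, True) ->
  (forall v : V, #|(lab v).1| = n) ->
  (forall v : V, forall i : 'I_m, i \in (lab v).1 ->
     row i (A *m (lab v).2) = row i (btilde b)) ->
  (forall v : V, lexge_mx (A *m (lab v).2) (btilde b)) ->
  (forall v : V, #|[set w | e v w]| = n) ->
  (forall v w : V, e v w -> lex_adj n (lab v).1 (lab w).1) ->
  (forall v : V, lex_feasible A b (lab v).1) /\
  injective (fun v : V => (lab v).1) /\
  (forall I : {set 'I_m}, lex_feasible A b I -> exists v : V, (lab v).1 = I) /\
  (forall v w : V, e v w <-> lex_adj n (lab v).1 (lab w).1).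
Proof. exact: main_sec. Qed.
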